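(* Let $u=(a,b,c)$ and $v=(a',b',c')$ be nonzero vectors in $\mathbb{Z}^3$ with $a^2+b^2+c^2=a'^2+b'^2+c'^2$, $aa'+bb'+cc'=0$ and $\gcd(a,b,c,a',b',c')=1$. Let $\square$ be the square $\mathrm{conv}\{0,u,v,u+v\}\subset\mathbb{R}^3$. Put $d=\gcd(a,b,c)$, $d'=\gcd(a',b',c')$ and $D=\gcd(bc'-b'c,\ ac'-a'c,\ ab'-a'b)$. Then the Ehrhart polynomial of $\square$ is $$E_\square(t)=Dt^2+(d+d')t+1.$$
   Context: For a polytope $P\subset\mathbb{R}^n$ with vertices in $\mathbb{Z}^n$, its Ehrhart polynomial $E_P$ is the polynomial satisfying $E_P(t)=\#(tP\cap\mathbb{Z}^n)$ for all positive integers $t$. *)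

(* Defs.v *)
From HB Require Import structures.
From mathcomp Require Import all_boot all_order all_algebra.
From mathcomp Require Import reals.
Set Implicit Arguments. Unset Strict Implicit. Unset Printing Implicit Defensive.
Import Order.TTheory GRing.Theory Num.Theory.
Local Open Scope ring_scope.

Definition vec3 (T : nmodType) (x y z : T) : 'rV[T]_3 :=
  \row_(i < 3) nth 0 [:: x; y; z] i.

Definition conv (R : realType) (P : seq 'rV[R]_3) : 'rV[R]_3 -> Prop :=
  fun x => exists w : 'I_(size P) -> R,
    (forall i, 0 <= w i) /\ \sum_(i < size P) w i = 1 /\
    x = \sum_(i < size P) w i *: P`_i.

Definition dilate (R : realType) (t : nat) (A : 'rV[R]_3 -> Prop) :
  'rV[R]_3 -> Prop := fun y => exists2 x, A x & y = t%:R *: x.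

Definition int_pt (R : realType) (z : 'rV[int]_3) : 'rV[R]_3 :=
  map_mx (fun k : int => k%:~R) z.

Definition lattice_card (R : realType) (A : 'rV[R]_3 -> Prop) (n : nat) :=
  exists s : seq 'rV[int]_3, uniq s /\
    (forall z, z \in s <-> A (@int_pt R z)) /\ size s = n.

Definition ehrhart_poly (R : realType) (P : 'rV[R]_3 -> Prop)
  (E : {poly rat}) : Prop :=
  forall t : nat, (0 < t)%N ->
    exists n : nat, lattice_card (dilate t P) n /\ n%:R = E.[t%:R].

(* Main.v *)
Require Import Defs.
From HB Require Import structures.
From mathcomp Require Import all_boot all_order all_algebra.
From mathcomp Require Import reals.
From mathcomp Require Import ring lra zify.
Import Order.TTheory GRing.Theory Num.Theory.
Local Open Scope ring_scope.
Lemma sum_periodic (F : nat -> nat) n t :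
  (forall i, F (i + n)%N = F i) ->
  (\sum_(i < t * n) F i = t * \sum_(i < n) F i)%N.
Proof.
move=> HF; elim: t => [|t IH]; first by rewrite mul0n big_ord0.
have Hper : forall k i, F (i + k * n)%N = F i.
  elim=> [|k IHk] i; first by rewrite mul0n addn0.
  by rewrite mulSn addnA IHk HF.
rewrite mulSn addnC big_split_ord /= IH addnC; congr (_ + _)%N.
by apply: eq_bigr => i _; rewrite addnC Hper.
Qed.

Lemma count_mult (n k : nat) : (0 < k)%N -> (k %| n)%N ->
  (\sum_(i < n) (k %| i : nat) = n %/ k)%N.
Proof.
move=> k0 /dvdnP [m ->]; rewrite mulnK //.
rewrite (sum_periodic (fun i => (k %| i : nat))); last by move=> i; rewrite dvdn_addl.
case: k k0 => // k _.
rewrite big_ord_recl /= big1 ?addn0 ?muln1 // => i _.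
suff -> : (k.+1 %| bump 0 i)%N = false by [].
apply/negP => /dvdn_leq; rewrite /bump /= add1n => /(_ isT).
by rewrite ltnS leqNgt ltn_ord.
Qed.

Lemma iter_per (F : nat -> nat) n : (forall i, F (i + n)%N = F i) ->
  forall k i, F (i + k * n)%N = F i.
Proof.
move=> HF; elim=> [|k IHk] i; first by rewrite mul0n addn0.
by rewrite mulSn addnA IHk HF.
Qed.

Lemma sum_periodic1 (F : nat -> nat) n t :
  (forall i, F (i + n)%N = F i) ->
  (\sum_(i < (t * n).+1) F i = t * \sum_(i < n) F i + F 0)%N.
Proof.
move=> HF; rewrite big_ord_recr /= (sum_periodic F n t HF).
by rewrite -[X in F X](add0n (t * n)%N) (iter_per F n HF).
Qed.

Lemma sum2_periodic (F : nat -> nat -> nat) n t :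
  (forall i j, F (i + n)%N j = F i j) -> (forall i j, F i (j + n)%N = F i j) ->
  (\sum_(i < (t * n).+1) \sum_(j < (t * n).+1) F i j =
   t * t * (\sum_(i < n) \sum_(j < n) F i j) + t * \sum_(j < n) F 0 j
   + t * \sum_(i < n) F i 0 + F 0 0)%N.
Proof.
move=> H1 H2.
rewrite (eq_bigr (fun i : 'I_(t * n).+1 => t * \sum_(j < n) F i j + F i 0)%N); last first.
  by move=> i _; rewrite (sum_periodic1 (F i) n t (H2 i)).
rewrite big_split /= -big_distrr /=.
rewrite (sum_periodic1 (fun i => \sum_(j < n) F i j) n t); last first.
  by move=> i; apply: eq_bigr => j _; rewrite H1.
rewrite (sum_periodic1 (fun i => F i 0) n t); last by move=> i; rewrite H1.
rewrite mulnDr mulnA.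
by rewrite !addnA.
Qed.
Definition divall (D x y z : int) : bool :=
  [&& (D %| x)%Z, (D %| y)%Z & (D %| z)%Z].

Definition Pf (D a b c a' b' c' : int) (i j : nat) : nat :=
  divall D (i%:Z * a + j%:Z * a') (i%:Z * b + j%:Z * b') (i%:Z * c + j%:Z * c').

Definition Dof (a b c a' b' c' : int) :=
  gcdz (b * c' - b' * c) (gcdz (a * c' - a' * c) (a * b' - a' * b)).

Lemma dvdD3 (D x y z : int) : (D %| x)%Z -> (D %| y)%Z -> (D %| z)%Z -> (D %| x + y + z)%Z.
Proof. by move=> hx hy hz; rewrite !rpredD. Qed.

Lemma D_d0d1 (a b c a' b' c' d0 d1 l00 l01 l10 l11 l20 l21 r00 r01 r10 r11
   q00 q01 q02 q10 q11 q12 s00 s01 s10 s11 : int) :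
  a = l00 * d0 * r00 + l01 * d1 * r10 ->
  a' = l00 * d0 * r01 + l01 * d1 * r11 ->
  b = l10 * d0 * r00 + l11 * d1 * r10 ->
  b' = l10 * d0 * r01 + l11 * d1 * r11 ->
  c = l20 * d0 * r00 + l21 * d1 * r10 ->
  c' = l20 * d0 * r01 + l21 * d1 * r11 ->
  q00 * a + q01 * b + q02 * c = d0 * r00 ->
  q00 * a' + q01 * b' + q02 * c' = d0 * r01 ->
  q10 * a + q11 * b + q12 * c = d1 * r10 ->
  q10 * a' + q11 * b' + q12 * c' = d1 * r11 ->
  r00 * s00 + r01 * s10 = 1 -> r00 * s01 + r01 * s11 = 0 ->
  r10 * s00 + r11 * s10 = 0 -> r10 * s01 + r11 * s11 = 1 ->
  `|Dof a b c a' b' c'|%N = (`|d0| * `|d1|)%N.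
Proof.
move=> ea ea' eb eb' ec ec' f0 f0' f1 f1' g1 g2 g3 g4.
set D := Dof a b c a' b' c'.
have hw1 : (D %| b * c' - b' * c)%Z by apply: dvdz_gcdl.
have hw2 : (D %| a * c' - a' * c)%Z.
  by apply: dvdz_trans (dvdz_gcdr _ _) (dvdz_gcdl _ _).
have hw3 : (D %| a * b' - a' * b)%Z.
  by apply: dvdz_trans (dvdz_gcdr _ _) (dvdz_gcdr _ _).
have k1 : d0 * d1 * (r00 * r11 - r01 * r10) =
   (q00 * q11 - q01 * q10) * (a * b' - a' * b)
 + (q00 * q12 - q02 * q10) * (a * c' - a' * c)
 + (q01 * q12 - q02 * q11) * (b * c' - b' * c).
  transitivity ((d0 * r00) * (d1 * r11) - (d0 * r01) * (d1 * r10)); first by ring.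
  rewrite -f0 -f0' -f1 -f1'; ring.
have k2 : (r00 * r11 - r01 * r10) * (s00 * s11 - s01 * s10) = 1.
  transitivity ((r00 * s00 + r01 * s10) * (r10 * s01 + r11 * s11)
     - (r00 * s01 + r01 * s11) * (r10 * s00 + r11 * s10)); first by ring.
  by rewrite g1 g2 g3 g4; ring.
have h1 : (D %| d0 * d1)%Z.
  have -> : d0 * d1 = d0 * d1 * (r00 * r11 - r01 * r10) * (s00 * s11 - s01 * s10).
    by rewrite -mulrA k2 mulr1.
  apply: dvdz_mulr; rewrite k1; apply: dvdD3; exact: dvdz_mull.
have h2 : (d0 * d1 %| D)%Z.
  have hh : forall x y : int, x = y * (d0 * d1) -> (d0 * d1 %| x)%Z.
    by move=> x y ->; apply: dvdz_mull; apply: dvdzz.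
  rewrite /D /Dof !dvdz_gcd; apply/and3P; split; apply: hh.
  - by rewrite eb ec eb' ec'; instantiate (1 := (l10 * l21 - l11 * l20) * (r00 * r11 - r01 * r10)); ring.
  - by rewrite ea ec ea' ec'; instantiate (1 := (l00 * l21 - l01 * l20) * (r00 * r11 - r01 * r10)); ring.
  - by rewrite ea eb ea' eb'; instantiate (1 := (l00 * l11 - l01 * l10) * (r00 * r11 - r01 * r10)); ring.
rewrite -abszM; apply/eqP; rewrite eqn_dvd.
by move: h1 h2; rewrite !dvdzE => -> ->.
Qed.

Lemma Pf_Q (D a b c a' b' c' d0 d1 l00 l01 l10 l11 l20 l21 r00 r01 r10 r11
   q00 q01 q02 q10 q11 q12 : int) (i j : int) :
  a = l00 * d0 * r00 + l01 * d1 * r10 ->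
  a' = l00 * d0 * r01 + l01 * d1 * r11 ->
  b = l10 * d0 * r00 + l11 * d1 * r10 ->
  b' = l10 * d0 * r01 + l11 * d1 * r11 ->
  c = l20 * d0 * r00 + l21 * d1 * r10 ->
  c' = l20 * d0 * r01 + l21 * d1 * r11 ->
  q00 * a + q01 * b + q02 * c = d0 * r00 ->
  q00 * a' + q01 * b' + q02 * c' = d0 * r01 ->
  q10 * a + q11 * b + q12 * c = d1 * r10 ->
  q10 * a' + q11 * b' + q12 * c' = d1 * r11 ->
  divall D (i * a + j * a') (i * b + j * b') (i * c + j * c') =
  ((D %| d0 * (r00 * i + r01 * j)) && (D %| d1 * (r10 * i + r11 * j)))%Z.
Proof.
move=> ea ea' eb eb' ec ec' f0 f0' f1 f1'.
apply/idP/idP.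
  case/and3P => h1 h2 h3; apply/andP; split.
    have -> : d0 * (r00 * i + r01 * j) = q00 * (i * a + j * a') +
       q01 * (i * b + j * b') + q02 * (i * c + j * c').
      transitivity (i * (d0 * r00) + j * (d0 * r01)); first by ring.
      rewrite -f0 -f0'; ring.
    by apply: dvdD3; apply: dvdz_mull.
  have -> : d1 * (r10 * i + r11 * j) = q10 * (i * a + j * a') +
     q11 * (i * b + j * b') + q12 * (i * c + j * c').
    transitivity (i * (d1 * r10) + j * (d1 * r11)); first by ring.
    rewrite -f1 -f1'; ring.
  by apply: dvdD3; apply: dvdz_mull.
case/andP => h1 h2.
have hh : forall l0 l1 x, x = l0 * (d0 * (r00 * i + r01 * j)) + l1 * (d1 * (r10 * i + r11 * j)) ->
  (D %| x)%Z.
  by move=> l0 l1 x ->; rewrite rpredD // dvdz_mull.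
apply/and3P; split.
- by apply: (hh l00 l01); rewrite ea ea'; ring.
- by apply: (hh l10 l11); rewrite eb eb'; ring.
- by apply: (hh l20 l21); rewrite ec ec'; ring.
Qed.

Lemma mod_lt (D x : int) : D != 0 -> (`|(x %% D)%Z| < `|D|)%N.
Proof.
move=> D0; have h1 := modz_ge0 x D0; have h2 := ltz_mod x D0.
lia.
Qed.

Lemma modz_absE (D x : int) : D != 0 -> (`|(x %% D)%Z|%:Z = (x %% D)%Z).
Proof. by move=> D0; have h1 := modz_ge0 x D0; lia. Qed.

Lemma dvd_small (D x y : int) : (D %| x - y)%Z -> 0 <= x < `|D| -> 0 <= y < `|D| -> x = y.
Proof.
move=> h hx hy; rewrite -eqz_mod_dvd in h.
move: h; rewrite -!(modz_abs _ D).
by rewrite !modz_small // => /eqP.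
Qed.

Lemma count_dvd (D d0 d1 : int) : D != 0 -> `|D|%N = (`|d0| * `|d1|)%N ->
  (\sum_(x < `|D|) ((D %| (d0 * x%:Z)%R)%Z : nat) = `|d0|)%N.
Proof.
move=> D0 HD.
have Dp : (0 < `|D|)%N by rewrite absz_gt0.
have d00 : (0 < `|d0|)%N by rewrite lt0n; apply/eqP => h; move: Dp; rewrite HD h.
have d10 : (0 < `|d1|)%N by rewrite lt0n; apply/eqP => h; move: Dp; rewrite HD h muln0.
rewrite (eq_bigr (fun x : 'I_`|D| => (`|d1| %| x : nat)%N)); last first.
  move=> x _; rewrite dvdzE abszM; move: (nat_of_ord x) => y.
  by rewrite HD /= dvdn_pmul2l.
rewrite (count_mult (`|D|) (`|d1|)) // ?HD ?mulnK // dvdn_mull //.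
Qed.

Lemma count_Q (D d0 d1 r00 r01 r10 r11 s00 s01 s10 s11 : int) :
  D != 0 -> `|D|%N = (`|d0| * `|d1|)%N ->
  s00 * r00 + s01 * r10 = 1 -> s00 * r01 + s01 * r11 = 0 ->
  s10 * r00 + s11 * r10 = 0 -> s10 * r01 + s11 * r11 = 1 ->
  (\sum_(i < `|D|) \sum_(j < `|D|)
     ((D %| (d0 * (r00 * i%:Z + r01 * j%:Z))%R) && (D %| (d1 * (r10 * i%:Z + r11 * j%:Z))%R))%Z
   = `|D|)%N.
Proof.
move=> D0 HD g1 g2 g3 g4.
set n := `|D|%N.
pose mo (x : int) : 'I_n := Ordinal (mod_lt D x D0).
have moE : forall x : int, (mo x : nat)%:Z = (x %% D)%Z by move=> x; apply: modz_absE.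
pose Q (x y : int) := ((D %| d0 * x) && (D %| d1 * y))%Z.
have Qmod : forall x y, Q x y = Q (mo x) (mo y).
  have hm : forall e x : int, (D %| e * x)%Z = (D %| e * (mo x))%Z.
    move=> e x; rewrite moE {1}(divz_eq x D) mulrDr.
    by rewrite rpredDl //; apply/dvdz_mull/dvdz_mull/dvdzz.
  by move=> x y; rewrite /Q -!hm.
pose sg (p : 'I_n * 'I_n) := (mo (r00 * p.1%:Z + r01 * p.2%:Z), mo (r10 * p.1%:Z + r11 * p.2%:Z)).
have sg_inj : injective sg.
  move=> [i j] [i' j'] /= [] H1 H2.
  move: H1 => /(congr1 Posz); rewrite !modz_absE // => /eqP h1.
  move: H2 => /(congr1 Posz); rewrite !modz_absE // => /eqP h2.
  rewrite eqz_mod_dvd in h1; rewrite eqz_mod_dvd in h2.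
  have e1 : (i%:Z - i'%:Z) = s00 * (r00 * i + r01 * j - (r00 * i' + r01 * j'))
      + s01 * (r10 * i + r11 * j - (r10 * i' + r11 * j')).
    transitivity ((s00 * r00 + s01 * r10) * (i%:Z - i'%:Z) + (s00 * r01 + s01 * r11) * (j%:Z - j'%:Z)).
      by rewrite g1 g2; ring.
    ring.
  have e2 : (j%:Z - j'%:Z) = s10 * (r00 * i + r01 * j - (r00 * i' + r01 * j'))
      + s11 * (r10 * i + r11 * j - (r10 * i' + r11 * j')).
    transitivity ((s10 * r00 + s11 * r10) * (i%:Z - i'%:Z) + (s10 * r01 + s11 * r11) * (j%:Z - j'%:Z)).
      by rewrite g3 g4; ring.
    ring.
  have hi : (D %| i%:Z - i'%:Z)%Z by rewrite e1 rpredD // dvdz_mull.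
  have hj : (D %| j%:Z - j'%:Z)%Z by rewrite e2 rpredD // dvdz_mull.
  have ltI : forall k : 'I_n, 0 <= k%:Z < `|D| by move=> k; have := ltn_ord k; rewrite /n; lia.
  have /eqP Ei := dvd_small _ _ _ hi (ltI i) (ltI i').
  have /eqP Ej := dvd_small _ _ _ hj (ltI j) (ltI j').
  by congr (_, _); apply: val_inj; apply/eqP; move: Ei Ej; rewrite !eqz_nat.
rewrite pair_big /=.
rewrite (eq_bigr (fun p : 'I_n * 'I_n => Q (sg p).1 (sg p).2 : nat)); last first.
  by move=> [i j] _ /=; rewrite -Qmod.
have -> : (\sum_(p : 'I_n * 'I_n) (Q (sg p).1 (sg p).2 : nat) =
    \sum_(p : 'I_n * 'I_n) (Q p.1 p.2 : nat))%N.
  by symmetry; apply: (reindex_inj sg_inj).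
rewrite -(pair_bigA _ (fun (i j : 'I_n) => (Q i j : nat))) /= /Q.
rewrite (eq_bigr (fun i : 'I_n => ((D %| (d0 * i%:Z)%R)%Z : nat) * \sum_(j < n) ((D %| (d1 * j%:Z)%R)%Z : nat))%N); last first.
  by move=> i _; rewrite big_distrr /=; apply: eq_bigr => j _; rewrite mulnb.
rewrite -big_distrl /= (count_dvd _ _ _ D0 HD).
have HD' : `|D|%N = (`|d1| * `|d0|)%N by rewrite HD mulnC.
by rewrite (count_dvd _ _ _ D0 HD') -HD.
Qed.

Arguments D_d0d1 {a b c a' b' c' d0 d1 l00 l01 l10 l11 l20 l21 r00 r01 r10 r11 q00 q01 q02 q10 q11 q12 s00 s01 s10 s11}.
Arguments Pf_Q {D a b c a' b' c' d0 d1 l00 l01 l10 l11 l20 l21 r00 r01 r10 r11 q00 q01 q02 q10 q11 q12} i j.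
Arguments count_Q {D d0 d1 r00 r01 r10 r11 s00 s01 s10 s11}.

Lemma H_card (a b c a' b' c' : int) : Dof a b c a' b' c' != 0 ->
  (\sum_(i < `|Dof a b c a' b' c'|) \sum_(j < `|Dof a b c a' b' c'|)
     Pf (Dof a b c a' b' c') a b c a' b' c' i j = `|Dof a b c a' b' c'|)%N.
Proof.
move=> D0.
pose M : 'M[int]_(3, 2) := \matrix_(k, l) (if l == 0 :> nat then [:: a; b; c]`_k else [:: a'; b'; c']`_k).
have [L Lu [R Ru [d _ EM]]] := int_Smith_normal_form M.
have EMkl : forall k l, M k l = L k 0 * d`_0 * R 0 l + L k 1 * d`_1 * R 1 l.
  move=> k l; rewrite EM !mxE !big_ord_recr !big_ord0 /= !mxE.
  rewrite !big_ord_recr !big_ord0 /= !mxE /= !mulr0n !mulr1n.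
  have -> : (widen_ord (leqnSn 2) (widen_ord (leqnSn 1) ord_max) : 'I_3) = 0 by apply: val_inj.
  have -> : (widen_ord (leqnSn 2) ord_max : 'I_3) = 1 by apply: val_inj.
  have -> : (widen_ord (leqnSn 1) ord_max : 'I_2) = 0 by apply: val_inj.
  have -> : (ord_max : 'I_2) = 1 by apply: val_inj.
  ring.
pose Li := invmx L.
have HB : Li *m M = \matrix_(i < 3, j < 2) (d`_i *+ (i == j :> nat)) *m R.
  by rewrite EM !mulmxA mulVmx // mul1mx.
have EB : forall (k : 'I_3) l, Li k 0 * M 0 l + Li k 1 * M 1 l + Li k 2 * M 2 l
    = (d`_k *+ (k == 0 :> nat)) * R 0 l + (d`_k *+ (k == 1 :> nat)) * R 1 l.
  move=> k l; have := congr1 (fun A : 'M[int]_(3,2) => A k l) HB; rewrite /= !mxE.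
  rewrite !big_ord_recr !big_ord0 /= !mxE /=.
  have -> : (widen_ord (leqnSn 2) (widen_ord (leqnSn 1) ord_max) : 'I_3) = 0 by apply: val_inj.
  have -> : (widen_ord (leqnSn 2) ord_max : 'I_3) = 1 by apply: val_inj.
  have -> : (widen_ord (leqnSn 1) ord_max : 'I_2) = 0 by apply: val_inj.
  have -> : (ord_max : 'I_2) = 1 by apply: val_inj.
  have -> : (ord_max : 'I_3) = 2 by apply: val_inj.
  by rewrite !add0r => ->.
pose Ri := invmx R.
have HR1 := mulmxV Ru; have HR2 := mulVmx Ru.
have ER : forall (A B : 'M[int]_2) k l, (A *m B) k l = A k 0 * B 0 l + A k 1 * B 1 l.
  move=> A B k l; rewrite !mxE !big_ord_recr !big_ord0 /=.
  have -> : (widen_ord (leqnSn 1) ord_max : 'I_2) = 0 by apply: val_inj.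
  have -> : (ord_max : 'I_2) = 1 by apply: val_inj.
  ring.
have g1 := congr1 (fun A : 'M[int]_2 => A 0 0) HR1; have g2 := congr1 (fun A : 'M[int]_2 => A 0 1) HR1.
have g3 := congr1 (fun A : 'M[int]_2 => A 1 0) HR1; have g4 := congr1 (fun A : 'M[int]_2 => A 1 1) HR1.
have h1 := congr1 (fun A : 'M[int]_2 => A 0 0) HR2; have h2 := congr1 (fun A : 'M[int]_2 => A 0 1) HR2.
have h3 := congr1 (fun A : 'M[int]_2 => A 1 0) HR2; have h4 := congr1 (fun A : 'M[int]_2 => A 1 1) HR2.
rewrite /= !ER !mxE /= in g1 g2 g3 g4 h1 h2 h3 h4.
have ea := EMkl 0 0; have ea' := EMkl 0 1; have eb := EMkl 1 0; have eb' := EMkl 1 1.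
have ec := EMkl 2 0; have ec' := EMkl 2 1.
have f0 := EB 0 0; have f0' := EB 0 1; have f1 := EB 1 0; have f1' := EB 1 1.
rewrite !mxE /= in ea ea' eb eb' ec ec' f0 f0' f1 f1'.
rewrite ?mulr0n ?mulr1n ?mul0r ?addr0 ?add0r in f0 f0' f1 f1'.
have e13 : (1 %% 3 = 1)%N by [].
rewrite e13 in f1 f1'.
have HD := D_d0d1 ea ea' eb eb' ec ec' f0 f0' f1 f1' g1 g2 g3 g4.
rewrite -[RHS](count_Q D0 HD h1 h2 h3 h4).
apply: eq_bigr => i _; apply: eq_bigr => j _.
by rewrite /Pf (Pf_Q i j ea ea' eb eb' ec ec' f0 f0' f1 f1').
Qed.
Lemma conv_sq (R : realType) (u v x : 'rV[R]_3) :
  conv [:: 0; u; v; u + v] x <->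
  exists s r : R, [/\ 0 <= s <= 1, 0 <= r <= 1 & x = s *: u + r *: v].
Proof.
split.
  move=> [w [w0 [w1 ->]]].
  move: w1; rewrite /= !big_ord_recr big_ord0 /= => w1.
  set w_0 := w _ in w1 *; set w_1 := w _ in w1 *; set w_2 := w _ in w1 *; set w_3 := w _ in w1 *.
  rewrite big_ord0.
  have h0 : 0 <= w_0 := w0 _. have h1 : 0 <= w_1 := w0 _.
  have h2 : 0 <= w_2 := w0 _. have h3 : 0 <= w_3 := w0 _.
  exists (w_1 + w_3), (w_2 + w_3); split.
  - apply/andP; split; lra.
  - apply/andP; split; lra.
  - by apply/rowP => k; rewrite !mxE; ring.
move=> [s [r [/andP [s0 s1] /andP [r0 r1] ->]]].
pose w := fun i : 'I_4 => [:: (1 - s) * (1 - r); s * (1 - r); (1 - s) * r; s * r]`_i.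
exists w; split.
  move=> [[|[|[|[|i]]]] Hi] //=; rewrite /w /=; try (apply: mulr_ge0; lra).
split.
  rewrite /= !big_ord_recr big_ord0 /= /w /=; ring.
rewrite /= !big_ord_recr big_ord0 /= /w /=.
by apply/rowP => k; rewrite !mxE; ring.
Qed.


Lemma dil_sq (R : realType) (t : nat) (u v y : 'rV[R]_3) : (0 < t)%N ->
  dilate t (conv [:: 0; u; v; u + v]) y <->
  exists s r : R, [/\ 0 <= s <= t%:R, 0 <= r <= t%:R & y = s *: u + r *: v].
Proof.
move=> t0; have tp : (0 : R) < t%:R by rewrite ltr0n.
split.
  move=> [x /conv_sq [s [r [/andP [s0 s1] /andP [r0 r1] ->]]] ->].
  exists (t%:R * s), (t%:R * r); split.
  - apply/andP; split; nra.
  - apply/andP; split; nra.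
  - by rewrite scalerDr !scalerA.
move=> [s [r [/andP [s0 s1] /andP [r0 r1] ->]]].
exists ((s / t%:R) *: u + (r / t%:R) *: v).
  apply/conv_sq; exists (s / t%:R), (r / t%:R); split => //.
  - apply/andP; split; first by apply: divr_ge0; lra.
    by rewrite ler_pdivrMr // mul1r.
  - apply/andP; split; first by apply: divr_ge0; lra.
    by rewrite ler_pdivrMr // mul1r.
rewrite scalerDr !scalerA !mulrA !(mulrC t%:R) -!mulrA divff ?mulr1 //.
by rewrite lt0r_neq0.
Qed.


Lemma vec3E (T : nmodType) (x y z : T) (k : 'I_3) : vec3 x y z 0 k = [:: x; y; z]`_k.
Proof. by rewrite mxE. Qed.

Lemma int_corr (R : realType) (a b c a' b' c' : int) (z : 'rV[int]_3) (s r : R) :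
  int_pt R z = s *: vec3 a%:~R b%:~R c%:~R + r *: vec3 a'%:~R b'%:~R c'%:~R ->
  exists I J : int, [/\ s * (Dof a b c a' b' c')%:~R = I%:~R,
    r * (Dof a b c a' b' c')%:~R = J%:~R &
    forall k : 'I_3, Dof a b c a' b' c' * z 0 k = I * [:: a; b; c]`_k + J * [:: a'; b'; c']`_k].
Proof.
move=> H.
have E : forall k : 'I_3, (z 0 k)%:~R = s * ([:: a; b; c]`_k)%:~R + r * ([:: a'; b'; c']`_k)%:~R :> R.
  move=> k; have := congr1 (fun A : 'rV[R]_3 => A 0 k) H; rewrite !mxE /= => ->.
  by case: k => [[|[|[|]]] ?].
have E0 := E 0; have E1 := E 1; have E2 := E 2; rewrite /= in E0 E1 E2.
set zx := z 0 0 in E0; set zy := z 0 1 in E1; set zz := z 0 2 in E2.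
have [x1 [y1 B1]] := Bezoutz (a * c' - a' * c) (a * b' - a' * b).
have [x0 [y0 B0]] := Bezoutz (b * c' - b' * c) (gcdz (a * c' - a' * c) (a * b' - a' * b)).
have DE : Dof a b c a' b' c' = x0 * (b * c' - b' * c) + y0 * (x1 * (a * c' - a' * c) + y1 * (a * b' - a' * b)).
  by rewrite B1 B0.
exists (x0 * (zy * c' - zz * b') + y0 * (x1 * (zx * c' - zz * a') + y1 * (zx * b' - zy * a'))).
exists (x0 * (b * zz - c * zy) + y0 * (x1 * (a * zz - c * zx) + y1 * (a * zy - b * zx))).
have sI : s * (Dof a b c a' b' c')%:~R =
   (x0 * (zy * c' - zz * b') + y0 * (x1 * (zx * c' - zz * a') + y1 * (zx * b' - zy * a')))%:~R.
  rewrite DE !(intrD, intrM, intrB, intrN) E0 E1 E2; ring.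
have rJ : r * (Dof a b c a' b' c')%:~R =
   (x0 * (b * zz - c * zy) + y0 * (x1 * (a * zz - c * zx) + y1 * (a * zy - b * zx)))%:~R.
  rewrite DE !(intrD, intrM, intrB, intrN) E0 E1 E2; ring.
split => // k; apply: (@intr_inj R).
rewrite intrD !intrM -sI -rJ E; ring.
Qed.

Lemma D_neq0 (a b c a' b' c' : int) : (a, b, c) != (0, 0, 0) ->
  a ^+ 2 + b ^+ 2 + c ^+ 2 = a' ^+ 2 + b' ^+ 2 + c' ^+ 2 ->
  a * a' + b * b' + c * c' = 0 -> Dof a b c a' b' c' != 0.
Proof.
move=> hu hN hd; apply/negP; rewrite /Dof !gcdz_eq0 => /and3P [/eqP w1 /eqP w2 /eqP w3].
have : (a ^+ 2 + b ^+ 2 + c ^+ 2) * (a' ^+ 2 + b' ^+ 2 + c' ^+ 2) = 0.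
  transitivity ((a * a' + b * b' + c * c') ^+ 2 + (b * c' - b' * c) ^+ 2
    + (a * c' - a' * c) ^+ 2 + (a * b' - a' * b) ^+ 2); first by ring.
  by rewrite hd w1 w2 w3; ring.
rewrite -hN => /eqP; rewrite mulf_eq0 orbb => /eqP h.
have ha : a = 0 by nia.
have hb : b = 0 by nia.
have hc : c = 0 by nia.
by move: hu; rewrite ha hb hc eqxx.
Qed.

Lemma Pf_per1 (a b c a' b' c' : int) i j :
  Pf (Dof a b c a' b' c') a b c a' b' c' (i + `|Dof a b c a' b' c'|) j
  = Pf (Dof a b c a' b' c') a b c a' b' c' i j.
Proof.
set D := Dof a b c a' b' c'.
have hn : forall e : int, (D %| `|D|%:Z * e)%Z.
  by move=> e; apply: dvdz_mulr; rewrite dvdzE /= dvdnn.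
rewrite /Pf /divall PoszD.
have E : forall x y : int, (D %| (i%:Z + `|D|%:Z) * x + j%:Z * y)%Z = (D %| i%:Z * x + j%:Z * y)%Z.
  move=> x y.
  have -> : (i%:Z + `|D|%:Z) * x + j%:Z * y = (i%:Z * x + j%:Z * y) + `|D|%:Z * x by ring.
  by rewrite rpredDr ?hn.
by rewrite !E.
Qed.

Lemma Pf_per2 (a b c a' b' c' : int) i j :
  Pf (Dof a b c a' b' c') a b c a' b' c' i (j + `|Dof a b c a' b' c'|)
  = Pf (Dof a b c a' b' c') a b c a' b' c' i j.
Proof.
set D := Dof a b c a' b' c'.
have hn : forall e : int, (D %| `|D|%:Z * e)%Z.
  by move=> e; apply: dvdz_mulr; rewrite dvdzE /= dvdnn.
rewrite /Pf /divall PoszD.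
have E : forall x y : int, (D %| i%:Z * x + (j%:Z + `|D|%:Z) * y)%Z = (D %| i%:Z * x + j%:Z * y)%Z.
  move=> x y.
  have -> : i%:Z * x + (j%:Z + `|D|%:Z) * y = (i%:Z * x + j%:Z * y) + `|D|%:Z * y by ring.
  by rewrite rpredDr ?hn.
by rewrite !E.
Qed.

Lemma divall_gcd (D x y z : int) (j : nat) :
  divall D (j%:Z * x) (j%:Z * y) (j%:Z * z) = (D %| gcdz x (gcdz y z) * j%:Z)%Z.
Proof.
have -> : gcdz x (gcdz y z) * j%:Z = gcdz (x * j%:Z) (gcdz (y * j%:Z) (z * j%:Z)).
  by rewrite -!mulz_gcdl.
by rewrite /divall !dvdz_gcd !(mulrC j%:Z).
Qed.

Lemma gcd_dvd_D (a b c a' b' c' : int) :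
  (gcdz a (gcdz b c) %| Dof a b c a' b' c')%Z /\ (gcdz a' (gcdz b' c') %| Dof a b c a' b' c')%Z.
Proof.
have H : forall x y z : int, [/\ (gcdz x (gcdz y z) %| x)%Z, (gcdz x (gcdz y z) %| y)%Z
   & (gcdz x (gcdz y z) %| z)%Z].
  move=> x y z; split; first exact: dvdz_gcdl.
    exact: dvdz_trans (dvdz_gcdr _ _) (dvdz_gcdl _ _).
  exact: dvdz_trans (dvdz_gcdr _ _) (dvdz_gcdr _ _).
have [ha hb hc] := H a b c; have [ha' hb' hc'] := H a' b' c'.
rewrite /Dof !dvdz_gcd; split; apply/and3P; split; apply: rpredB;
  solve [ apply: dvdz_mulr; assumption | apply: dvdz_mull; assumption ].
Qed.

Lemma bound_sum (D g : int) : D != 0 -> (g %| D)%Z ->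
  (\sum_(j < `|D|) ((D %| (g * j%:Z)%R)%Z : nat) = `|g|)%N.
Proof.
move=> D0 gD; apply: (count_dvd D g (D %/ g)%Z) => //.
by rewrite -abszM mulrC divzK.
Qed.

Lemma lin_indep (a b c a' b' c' x y : int) : Dof a b c a' b' c' != 0 ->
  x * a = y * a' -> x * b = y * b' -> x * c = y * c' -> x = 0 /\ y = 0.
Proof.
move=> D0 e1 e2 e3.
have hx1 : x * (b * c' - b' * c) = 0.
  transitivity ((x * b) * c' - b' * (x * c)); first by ring.
  by rewrite e2 e3; ring.
have hx2 : x * (a * c' - a' * c) = 0.
  transitivity ((x * a) * c' - a' * (x * c)); first by ring.
  by rewrite e1 e3; ring.
have hx3 : x * (a * b' - a' * b) = 0.
  transitivity ((x * a) * b' - a' * (x * b)); first by ring.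
  by rewrite e1 e2; ring.
have hy1 : y * (b * c' - b' * c) = 0.
  transitivity (b * (y * c') - (y * b') * c); first by ring.
  by rewrite -e2 -e3; ring.
have hy2 : y * (a * c' - a' * c) = 0.
  transitivity (a * (y * c') - (y * a') * c); first by ring.
  by rewrite -e1 -e3; ring.
have hy3 : y * (a * b' - a' * b) = 0.
  transitivity (a * (y * b') - (y * a') * b); first by ring.
  by rewrite -e1 -e2; ring.
have key : forall e : int, e * (b * c' - b' * c) = 0 -> e * (a * c' - a' * c) = 0 ->
    e * (a * b' - a' * b) = 0 -> e = 0.
  move=> e h1 h2 h3; apply/eqP; apply: contraNT D0 => e0.
  move/eqP: h1; move/eqP: h2; move/eqP: h3.
  rewrite !mulf_eq0 (negbTE e0) /= /Dof !gcdz_eq0 => -> -> ->.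
  by [].
by split; apply: key.
Qed.

Lemma nth_intr (R : realType) (x y z : int) (k : 'I_3) :
  ([:: x%:~R; y%:~R; z%:~R] : seq R)`_k = ([:: x; y; z]`_k)%:~R.
Proof. by case: k => [[|[|[|]]] ?]. Qed.

Lemma lin_step (x1 y1 x2 y2 e f : int) : x1 * e + y1 * f = x2 * e + y2 * f ->
  (x1 - x2) * e = (y2 - y1) * f.
Proof.
move=> h; apply/eqP; rewrite -subr_eq0.
have -> : (x1 - x2) * e - (y2 - y1) * f = (x1 * e + y1 * f) - (x2 * e + y2 * f) by ring.
by rewrite h subrr.
Qed.

Lemma bnd_lem (R : realType) (t n x : nat) : (0 < n)%N -> (x <= t * n)%N ->
  0 <= (x%:R : R) / n%:R <= t%:R.
Proof.
move=> n0 xt; apply/andP; split; first by apply: divr_ge0; rewrite ler0n.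
by rewrite ler_pdivrMr ?ltr0n // -natrM ler_nat.
Qed.

Theorem theorem2p2 (R : realType) (a b c a' b' c' : int) :
  (a, b, c) != (0, 0, 0) ->
  (a', b', c') != (0, 0, 0) ->
  a ^+ 2 + b ^+ 2 + c ^+ 2 = a' ^+ 2 + b' ^+ 2 + c' ^+ 2 ->
  a * a' + b * b' + c * c' = 0 ->
  gcdz a (gcdz b (gcdz c (gcdz a' (gcdz b' c')))) = 1 ->
  let u : 'rV[R]_3 := vec3 a%:~R b%:~R c%:~R in
  let v : 'rV[R]_3 := vec3 a'%:~R b'%:~R c'%:~R in
  let d := gcdz a (gcdz b c) in
  let d' := gcdz a' (gcdz b' c') in
  let D := gcdz (b * c' - b' * c) (gcdz (a * c' - a' * c) (a * b' - a' * b)) in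
  ehrhart_poly (conv [:: 0; u; v; u + v])
    ((D%:~R)%:P * 'X^2 + ((d + d')%:~R)%:P * 'X + 1).
Proof.
move=> hu hv hN hd _ u v d d' D t t0.
have D0 : Dof a b c a' b' c' != 0 := D_neq0 _ _ _ _ _ _ hu hN hd.
have DE : D = Dof a b c a' b' c' by [].
set n := `|Dof a b c a' b' c'|%N.
have Dn : Dof a b c a' b' c' = n%:Z by rewrite /n /Dof /gcdz.
have n0 : (0 < n)%N by rewrite /n absz_gt0.
pose T := (t * n)%N.
pose Pb (p : 'I_T.+1 * 'I_T.+1) := divall (Dof a b c a' b' c')
   (p.1%:Z * a + p.2%:Z * a') (p.1%:Z * b + p.2%:Z * b') (p.1%:Z * c + p.2%:Z * c').
pose mk (p : 'I_T.+1 * 'I_T.+1) : 'rV[int]_3 :=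
  \row_k ((p.1%:Z * [:: a; b; c]`_k + p.2%:Z * [:: a'; b'; c']`_k) %/ Dof a b c a' b' c')%Z.
have mkE : forall p, Pb p -> forall k : 'I_3,
    mk p 0 k * Dof a b c a' b' c' = p.1%:Z * [:: a; b; c]`_k + p.2%:Z * [:: a'; b'; c']`_k.
  move=> p /and3P [h1 h2 h3] k; rewrite mxE divzK //.
  by case: k => [[|[|[|]]] ?].
exists (\sum_(i < T.+1) \sum_(j < T.+1) Pf (Dof a b c a' b' c') a b c a' b' c' i j)%N.
split.
  exists [seq mk p | p <- enum Pb]; split; last split.
  - rewrite map_inj_in_uniq ?enum_uniq //.
    move=> [p1 p2] [q1 q2]; rewrite !mem_enum => Pp Pq Emk.
    have e : forall k : 'I_3, p1%:Z * [:: a; b; c]`_k + p2%:Z * [:: a'; b'; c']`_k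
        = q1%:Z * [:: a; b; c]`_k + q2%:Z * [:: a'; b'; c']`_k.
      by move=> k; rewrite -(mkE _ Pp) -(mkE _ Pq) Emk.
    have e0 := lin_step _ _ _ _ _ _ (e 0); have e1 := lin_step _ _ _ _ _ _ (e 1); have e2 := lin_step _ _ _ _ _ _ (e 2).
    rewrite /= in e0 e1 e2.
    have [/eqP x0 /eqP y0] := lin_indep a b c a' b' c' _ _ D0 e0 e1 e2.
    move: x0 y0; rewrite !subr_eq0 !eqz_nat => /eqP h1 /eqP h2.
    by congr (_, _); apply: val_inj.
  - move=> z; split.
      case/mapP => p; rewrite mem_enum => Pp ->.
      apply/dil_sq => //.
      have nR : (n%:R : R) != 0 by rewrite pnatr_eq0 -lt0n.
      have nR' : (0 : R) < n%:R by rewrite ltr0n.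
      exists ((p.1 : nat)%:R / n%:R), ((p.2 : nat)%:R / n%:R); split.
      - by apply: bnd_lem => //; rewrite -ltnS.
      - by apply: bnd_lem => //; rewrite -ltnS.
      apply/rowP => k; rewrite [LHS]mxE; set L := (mk p 0 k)%:~R; rewrite /u /v !mxE !nth_intr.
      have := congr1 (fun x : int => (x%:~R : R)) (mkE p Pp k).
      rewrite /= Dn !intrD !intrM -!pmulrn => H.
      apply: (mulIf nR); rewrite /L H; field.
      done.
    move/dil_sq => /(_ t0) [s [r [/andP [s0 st] /andP [r0 rt] E]]].
    have [I [J [sI rJ EI]]] := int_corr R a b c a' b' c' z s r E.
    rewrite Dn in sI rJ EI.
    have nR' : (0 : R) < n%:R by rewrite ltr0n.
    have I0 : 0 <= I by rewrite -(ler0z R) -sI; apply: mulr_ge0 => //; apply: ltW.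
    have J0 : 0 <= J by rewrite -(ler0z R) -rJ; apply: mulr_ge0 => //; apply: ltW.
    have IT : I <= (T%:Z) by rewrite -(ler_int R) -sI /T PoszM intrM; apply: ler_wpM2r; [rewrite ler0z | exact: st].
    have JT : J <= (T%:Z) by rewrite -(ler_int R) -rJ /T PoszM intrM; apply: ler_wpM2r; [rewrite ler0z | exact: rt].
    have iT : (`|I| < T.+1)%N by rewrite ltnS; lia.
    have jT : (`|J| < T.+1)%N by rewrite ltnS; lia.
    have IE : (`|I|%:Z = I) by lia.
    have JE : (`|J|%:Z = J) by lia.
    apply/mapP; exists (Ordinal iT, Ordinal jT).
      rewrite mem_enum /Pb /divall /in_mem /= IE JE.
      have e0 := EI 0; have e1 := EI 1; have e2 := EI 2; rewrite /= in e0 e1 e2.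
      rewrite -e0 -e1 -e2 Dn.
      by apply/and3P; split; apply: dvdz_mulr; apply: dvdzz.
    apply/rowP => k; rewrite mxE /= IE JE -EI mulKz //.
  - rewrite size_map -cardE -sum1_card big_mkcond /=.
    rewrite pair_bigA /=; apply: eq_bigr => p _.
    by rewrite /Pf; case: (Pb p).
rewrite (sum2_periodic _ n t (Pf_per1 a b c a' b' c') (Pf_per2 a b c a' b' c')).
rewrite H_card //.
have B2 : (\sum_(j < n) Pf (Dof a b c a' b' c') a b c a' b' c' 0 j = `|d'|)%N.
  rewrite -(bound_sum _ d' D0); last by case: (gcd_dvd_D a b c a' b' c').
  apply: eq_bigr => j _; rewrite /Pf !mul0r !add0r divall_gcd //.
have B1 : (\sum_(i < n) Pf (Dof a b c a' b' c') a b c a' b' c' i 0 = `|d|)%N.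
  rewrite -(bound_sum _ d D0); last by case: (gcd_dvd_D a b c a' b' c').
  apply: eq_bigr => i _; rewrite /Pf !mul0r !addr0 divall_gcd //.
rewrite B1 B2.
have -> : Pf (Dof a b c a' b' c') a b c a' b' c' 0 0 = 1%N.
  by rewrite /Pf /divall !mul0r !addr0 !dvdz0.
have dE : d = `|d|%:Z by rewrite /d /gcdz.
have d'E : d' = `|d'|%:Z by rewrite /d' /gcdz.
set dn := `|d|%N; set dn' := `|d'|%N.
rewrite !(hornerD, hornerM, hornerC, hornerXn, hornerX) ?horner1 ?hornerC DE Dn dE d'E intrD -!pmulrn !natrD !natrM !absz_nat /dn /dn'.
have -> : gcdn `|a| (gcdn `|b| `|c|) = `|d|%N by [].
have -> : gcdn `|a'| (gcdn `|b'| `|c'|) = `|d'|%N by [].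
ring.
Qed.
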